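(* Let $\mathcal{A}$ be a complex unital structurable algebra of type $(1,2)$. Then $\mathcal{A}$ is isomorphic (as an algebra with involution) to the universal unital algebra ${\rm S}_1$ of type $(1,2)$, or to the algebra ${\rm S}_2$ with basis $\{e_1,e_2,e_3\}$, unit $e_1$, involution $\overline{e_1}=e_1$, $\overline{e_2}=-e_2$, $\overline{e_3}=-e_3$, and multiplication (besides $e_1e_i=e_ie_1=e_i$; all unlisted products of basis elements zero) $e_2e_3=e_2$, $e_3e_2=-e_2$, $e_3e_3=e_1$.
   Context: An involution on an algebra $\mathcal{A}$ is a linear map $x\mapsto\overline{x}$ with $\overline{\overline{x}}=x$ and $\overline{xy}=\overline{y}\,\overline{x}$. For a unital algebra with involution write $\mathcal{A}=\mathcal{H}\oplus\mathcal{S}$ with $\mathcal{H}=\{a:\overline a=a\}$, $\mathcal{S}=\{a:\overline a=-a\}$; $\mathcal{A}$ is of type $(k,n-k)$ if $\dim\mathcal{A}=n$ and $\dim\mathcal{H}=k$. For $x,y\in\mathcal{A}$ define $V_{x,y}(z)=(x\overline{y})z+(z\overline{y})x-(z\overline{x})y$ and $T_x(z)=xz+zx-z\overline{x}$. A unital algebra with involution is structurable if $T_zV_{x,y}-V_{x,y}T_z=V_{T_z(x),y}-V_{x,T_{\overline z}(y)}$ for all $x,y,z$. An isomorphism of algebras with involution is a linear bijection $\varphi$ with $\varphi(xy)=\varphi(x)\varphi(y)$ and $\varphi(\overline x)=\overline{\varphi(x)}$. The universal unital algebra of type $(1,2)$ is the $3$-dimensional algebra with basis $e_1,e_2,e_3$,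 whose only nonzero products of basis elements are $e_1e_i=e_ie_1=e_i$, with involution $\overline{e_1}=e_1$, $\overline{e_2}=-e_2$, $\overline{e_3}=-e_3$. *)

(* Defs.v *)
From HB Require Import structures.
From mathcomp Require Import all_boot all_order all_algebra.
From mathcomp Require Import reals complex.
Set Implicit Arguments.
Unset Strict Implicit.
Unset Printing Implicit Defensive.
Import Order.TTheory GRing.Theory Num.Theory.
Local Open Scope ring_scope.

Section AlgInv.
Variables (C : fieldType) (V : vectType C).

Definition bilinear_mul (mul : V -> V -> V) : Prop :=
  (forall (a : C) (x y z : V), mul (a *: x + y) z = a *: mul x z + mul y z) /\
  (forall (a : C) (x y z : V), mul z (a *: x + y) = a *: mul z x + mul z y).

Definition is_unit_elt (mul : V -> V -> V) (one : V) : Prop :=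
  forall x : V, mul one x = x /\ mul x one = x.

Definition is_involution (mul : V -> V -> V) (bar : V -> V) : Prop :=
  [/\ forall (a : C) (x y : V), bar (a *: x + y) = a *: bar x + bar y,
      forall x : V, bar (bar x) = x &
      forall x y : V, bar (mul x y) = mul (bar y) (bar x)].

Definition herm_space (bar : V -> V) : {vspace V} :=
  lker (linfun (fun x : V => bar x - x)).

Definition Vop (mul : V -> V -> V) (bar : V -> V) (x y z : V) : V :=
  mul (mul x (bar y)) z + mul (mul z (bar y)) x - mul (mul z (bar x)) y.

Definition Top (mul : V -> V -> V) (bar : V -> V) (x z : V) : V :=
  mul x z + mul z x - mul z (bar x).

Definition structurable (mul : V -> V -> V) (bar : V -> V) : Prop :=
  forall x y z w : V,
    Top mul bar z (Vop mul bar x y w) - Vop mul bar x y (Top mul bar z w)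
    = Vop mul bar (Top mul bar z x) y w - Vop mul bar x (Top mul bar (bar z) y) w.

End AlgInv.

Definition alg_inv_iso (C : fieldType) (V W : vectType C)
  (mulV : V -> V -> V) (barV : V -> V) (mulW : W -> W -> W) (barW : W -> W) : Prop :=
  exists phi : V -> W,
    [/\ bijective phi,
        forall (a : C) (x y : V), phi (a *: x + y) = a *: phi x + phi y,
        forall x y : V, phi (mulV x y) = mulW (phi x) (phi y) &
        forall x : V, phi (barV x) = barW (phi x)].

(* Concrete 3-dimensional algebras on C^3 = 'rV[C]_3, basis e_1,e_2,e_3 being
   the standard basis vectors (indices 0,1,2). *)
Section Concrete.
Variable C : fieldType.

Definition ebase (i : 'I_3) : 'rV[C]_3 := delta_mx 0 i.

Definition table_mul (tbl : 'I_3 -> 'I_3 -> 'rV[C]_3) (x y : 'rV[C]_3) : 'rV[C]_3 :=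
  \sum_(i < 3) \sum_(j < 3) (x 0 i * y 0 j) *: tbl i j.

Definition i1 : 'I_3 := 0.
Definition i2 : 'I_3 := 1.
Definition i3 : 'I_3 := 2%:R.

Definition S1_tbl (i j : 'I_3) : 'rV[C]_3 :=
  if i == i1 then ebase j else if j == i1 then ebase i else 0.

Definition S2_tbl (i j : 'I_3) : 'rV[C]_3 :=
  if i == i1 then ebase j else if j == i1 then ebase i
  else if (i == i2) && (j == i3) then ebase i2
  else if (i == i3) && (j == i2) then - ebase i2
  else if (i == i3) && (j == i3) then ebase i1
  else 0.

Definition S1_mul := table_mul S1_tbl.
Definition S2_mul := table_mul S2_tbl.

Definition S_bar (x : 'rV[C]_3) : 'rV[C]_3 :=
  \row_i (if i == i1 then x 0 i else - x 0 i).

End Concrete.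

(* Main.v *)
Require Import Defs.
From HB Require Import structures.
From mathcomp Require Import all_boot all_order all_algebra.
From mathcomp Require Import reals complex.
From mathcomp Require Import ring.
Import Order.TTheory GRing.Theory Num.Theory.
Local Open Scope ring_scope.

Section Bil.
Variables (C : fieldType) (V : vectType C) (mul : V -> V -> V).
Hypothesis bil : bilinear_mul mul.

Lemma mulDl x y z : mul (x + y) z = mul x z + mul y z.
Proof. by have := (proj1 bil) 1 x y z; rewrite !scale1r. Qed.
Lemma mulDr x y z : mul z (x + y) = mul z x + mul z y.
Proof. by have := (proj2 bil) 1 x y z; rewrite !scale1r. Qed.
Lemma mul0l z : mul 0 z = 0.
Proof. have := mulDl 0 0 z; rewrite addr0 => H; apply: (addrI (mul 0 z)); by rewrite addr0 -H. Qed.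
Lemma mul0r z : mul z 0 = 0.
Proof. have := mulDr 0 0 z; rewrite addr0 => H; apply: (addrI (mul z 0)); by rewrite addr0 -H. Qed.
Lemma mulZl a x z : mul (a *: x) z = a *: mul x z.
Proof. by have := (proj1 bil) a x 0 z; rewrite addr0 mul0l addr0. Qed.
Lemma mulZr a x z : mul z (a *: x) = a *: mul z x.
Proof. by have := (proj2 bil) a x 0 z; rewrite addr0 mul0r addr0. Qed.
Lemma mulNl x z : mul (- x) z = - mul x z.
Proof. by rewrite -scaleN1r mulZl scaleN1r. Qed.
Lemma mulNr x z : mul z (- x) = - mul z x.
Proof. by rewrite -scaleN1r mulZr scaleN1r. Qed.
Lemma mul_suml I (r : seq I) (P : pred I) (F : I -> V) z :
  mul (\sum_(i <- r | P i) F i) z = \sum_(i <- r | P i) mul (F i) z.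
Proof. by apply: (big_morph (fun x => mul x z)); [move=> *; apply: mulDl | apply: mul0l]. Qed.
Lemma mul_sumr I (r : seq I) (P : pred I) (F : I -> V) z :
  mul z (\sum_(i <- r | P i) F i) = \sum_(i <- r | P i) mul z (F i).
Proof. by apply: (big_morph (fun x => mul z x)); [move=> *; apply: mulDr | apply: mul0r]. Qed.
End Bil.

Section Lin.
Variables (C : fieldType) (V : vectType C) (bar : V -> V).
Hypothesis barL : forall (a : C) (x y : V), bar (a *: x + y) = a *: bar x + bar y.
Lemma bar0 : bar 0 = 0.
Proof. have := barL 1 0 0; rewrite scale1r !addr0 scale1r => H; apply: (addrI (bar 0)); by rewrite addr0 -H. Qed.
Lemma barD x y : bar (x + y) = bar x + bar y.
Proof. by have := barL 1 x y; rewrite !scale1r. Qed.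
Lemma barZ a x : bar (a *: x) = a *: bar x.
Proof. by have := barL a x 0; rewrite !addr0 bar0 addr0. Qed.
Lemma barN x : bar (- x) = - bar x.
Proof. by rewrite -scaleN1r barZ scaleN1r. Qed.
Lemma bar_sum I (r : seq I) (P : pred I) (F : I -> V) :
  bar (\sum_(i <- r | P i) F i) = \sum_(i <- r | P i) bar (F i).
Proof. by apply: (big_morph bar); [apply: barD | apply: bar0]. Qed.
End Lin.

Section IsoBasis.
Variables (C : fieldType) (V : vectType C) (mul : V -> V -> V) (bar : V -> V).
Hypothesis bil : bilinear_mul mul.
Hypothesis barL : forall (a : C) (x y : V), bar (a *: x + y) = a *: bar x + bar y.
Variables (tbl : 'I_3 -> 'I_3 -> 'rV[C]_3) (F : 'I_3 -> V) (phi : V -> 'rV[C]_3).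

Definition chi (u : 'rV[C]_3) : V := \sum_i u 0 i *: F i.

Lemma chiL a u v : chi (a *: u + v) = a *: chi u + chi v.
Proof.
rewrite /chi scaler_sumr -big_split /=; apply: eq_bigr => i _.
by rewrite !mxE scalerDl scalerA.
Qed.
Lemma chi0 : chi 0 = 0.
Proof. by rewrite /chi big1 // => i _; rewrite mxE scale0r. Qed.
Lemma chiD u v : chi (u + v) = chi u + chi v.
Proof. by have := chiL 1 u v; rewrite !scale1r. Qed.
Lemma chiZ a u : chi (a *: u) = a *: chi u.
Proof. by have := chiL a u 0; rewrite !addr0 chi0 addr0. Qed.
Lemma chi_sum I (r : seq I) (P : pred I) (G : I -> 'rV_3) :
  chi (\sum_(i <- r | P i) G i) = \sum_(i <- r | P i) chi (G i).
Proof. by apply: (big_morph chi); [apply: chiD | apply: chi0]. Qed.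

Hypothesis phiK : cancel phi chi.
Hypothesis chiK : cancel chi phi.
Hypothesis Fmul : forall i j, mul (F i) (F j) = chi (tbl i j).
Hypothesis Fbar : forall i, bar (F i) = if i == i1 then F i else - F i.

Lemma chi_mul u v : chi (table_mul tbl u v) = mul (chi u) (chi v).
Proof.
rewrite /table_mul chi_sum [X in mul X _]/chi mul_suml //; apply: eq_bigr => i _.
rewrite chi_sum mulZl // [X in mul _ X]/chi mul_sumr // scaler_sumr; apply: eq_bigr => j _.
by rewrite chiZ mulZr // scalerA Fmul.
Qed.

Lemma chi_bar u : chi (S_bar u) = bar (chi u).
Proof.
rewrite /chi bar_sum //; apply: eq_bigr => i _.
rewrite barZ // Fbar !mxE; case: (i == i1) => //.
by rewrite scaleNr scalerN.
Qed.

Lemma iso_from_basis : alg_inv_iso mul bar (table_mul tbl) (@S_bar C).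
Proof.
exists phi; split.
- by exists chi.
- move=> a x y; apply: (can_inj chiK).
  by rewrite chiL !phiK.
- move=> x y; apply: (can_inj chiK).
  by rewrite chi_mul !phiK.
- move=> x; apply: (can_inj chiK).
  by rewrite chi_bar !phiK.
Qed.
End IsoBasis.

Section T.
Variable C : numFieldType.
Variables (V : vectType C) (one s t : V).
Definition B : 3.-tuple V := [tuple one; s; t].
Lemma B0 : B`_i1 = one. Proof. by []. Qed.
Lemma B1 : B`_i2 = s. Proof. by []. Qed.
Lemma B2 : B`_i3 = t. Proof. by []. Qed.
Lemma ord3 (k : 'I_3) : k = i1 \/ k = i2 \/ k = i3.
Proof.
case: k => [[|[|[|//]]] Hk]; [left|right;left|right;right]; by apply: val_inj.
Qed.
Lemma sum3 (W : zmodType) (G : 'I_3 -> W) : \sum_(i < 3) G i = G i1 + G i2 + G i3.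
Proof.
rewrite !big_ord_recl big_ord0 addr0 addrA.
by congr (G _ + G _ + G _); apply: val_inj.
Qed.
Lemma lin_test (k : 'I_3) (a : C) (x y : V) : coord B k (a *: x + y) = a * coord B k x + coord B k y.
Proof. by rewrite linearD linearZ. Qed.
End T.
Arguments B {C V} one s t.
Arguments B0 {C V} one s t.
Arguments B1 {C V} one s t.
Arguments B2 {C V} one s t.

Lemma vhalf0 (C : numFieldType) (V : vectType C) (v : V) : v = - v -> v = 0.
Proof.
move=> H; have : (2%:R : C) *: v = 0 by rewrite scaler_nat mulr2n {2}H subrr.
by move/eqP; rewrite scaler_eq0 pnatr_eq0 /= => /eqP.
Qed.
Arguments vhalf0 {C V v}.

Definition T3 (C : Type) := (C * C * C)%type.

Section Model.
Variable C : numFieldType.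
Implicit Types x y : T3 C.
Definition addM x y : T3 C := let: (x0,x1,x2) := x in let: (y0,y1,y2) := y in (x0+y0, x1+y1, x2+y2).
Definition oppM x : T3 C := let: (x0,x1,x2) := x in (-x0, -x1, -x2).
Definition scaleM k x : T3 C := let: (x0,x1,x2) := x in (k*x0, k*x1, k*x2).
Definition barM x : T3 C := let: (x0,x1,x2) := x in (x0, -x1, -x2).
Variables (a b c p q : C).
Definition mulM x y : T3 C :=
  let: (x0,x1,x2) := x in let: (y0,y1,y2) := y in
  (x0*y0 + a*x1*y1 + b*(x1*y2 + x2*y1) + c*x2*y2,
   x0*y1 + x1*y0 + (x1*y2 - x2*y1) * p,
   x0*y2 + x2*y0 + (x1*y2 - x2*y1) * q).
Definition VopM x y z :=
  addM (addM (mulM (mulM x (barM y)) z) (mulM (mulM z (barM y)) x)) (oppM (mulM (mulM z (barM x)) y)).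
Definition TopM x z := addM (addM (mulM x z) (mulM z x)) (oppM (mulM z (barM x))).
End Model.
Arguments addM {C}. Arguments oppM {C}. Arguments scaleM {C}. Arguments barM {C}.
Arguments mulM {C}. Arguments VopM {C}. Arguments TopM {C}.

Lemma half0 (C : numFieldType) (x : C) : x = - x -> x = 0.
Proof.
move=> H; have : x * 2%:R = 0 by rewrite mulr_natr mulr2n {2}H subrr.
by move/eqP; rewrite mulf_eq0 pnatr_eq0 orbF => /eqP.
Qed.

Arguments half0 {C x}.

Lemma natcancel (C : numFieldType) (n : nat) (x y : C) : (0 < n)%N -> n%:R * (x - y) = 0 -> x = y.
Proof.
move=> n0 /eqP; rewrite mulf_eq0 pnatr_eq0 subr_eq0 -[n == 0]negbK -lt0n n0 /=.
by move/eqP.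
Qed.

Arguments natcancel {C} n {x y}.


Lemma model_eqs (C : numFieldType) (a b c p q : C) :
  (forall X Y Z W,
  let T := TopM a b c p q in let Vo := VopM a b c p q in
  addM (T Z (Vo X Y W)) (oppM (Vo X Y (T Z W))) =
  addM (Vo (T Z X) Y W) (oppM (Vo X (T (barM Z) Y) W))) ->
  a = q ^+ 2 /\ c = p ^+ 2 /\ b = - (p * q).
Proof.
move=> H.
have := H (0,1,0) (0,0,1) (0,1,0) (1,0,0).
rewrite /= => -[_ E1 E2].
have := H (0,1,0) (0,0,1) (0,0,1) (1,0,0).
rewrite /= => -[_ F1 _].
move/eqP: E1; rewrite -subr_eq0 => /eqP E1.
move/eqP: E2; rewrite -subr_eq0 => /eqP E2.
move/eqP: F1; rewrite -subr_eq0 => /eqP F1.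
split; last split.
- apply: (natcancel 6) => //.
  rewrite -[X in _ = X]E2; ring.
- apply/esym/(natcancel 6) => //.
  rewrite -[X in _ = X]F1; ring.
- apply/esym/(natcancel 6) => //.
  rewrite -[X in _ = X]E1; ring.
Qed.

Section Tab.
Variable C : numFieldType.
Variables (e1 e2 f1 f2 : C).
Definition Eidx (i : 'I_3) : T3 C :=
  if i == i1 then (1, 0, 0) else if i == i2 then (0, e1, e2) else (0, f1, f2).
Definition combM (u : 'rV[C]_3) : T3 C :=
  (u 0 i1, u 0 i2 * e1 + u 0 i3 * f1, u 0 i2 * e2 + u 0 i3 * f2).
Definition invM (y : T3 C) : 'rV[C]_3 :=
  \row_k (if k == i1 then y.1.1 else if k == i2 then f2 * y.1.2 - f1 * y.2
          else e1 * y.2 - e2 * y.1.2).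
Lemma Eidx1 : Eidx i1 = (1, 0, 0). Proof. by []. Qed.
Lemma Eidx2 : Eidx i2 = (0, e1, e2). Proof. by []. Qed.
Lemma Eidx3 : Eidx i3 = (0, f1, f2). Proof. by []. Qed.
Hypothesis det : e1 * f2 - f1 * e2 = 1.
Lemma combK y : combM (invM y) = y.
Proof.
case: y => [[y0 y1] y2]; rewrite /combM !mxE /=.
have d0 : e1 * f2 - f1 * e2 - 1 = 0 by rewrite det subrr.
congr (_, _, _).
- apply/eqP; rewrite -subr_eq0; apply/eqP.
  transitivity (y1 * (e1 * f2 - f1 * e2 - 1)); first ring.
  by rewrite d0 mulr0.
- apply/eqP; rewrite -subr_eq0; apply/eqP.
  transitivity (y2 * (e1 * f2 - f1 * e2 - 1)); first ring.
  by rewrite d0 mulr0.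
Qed.
Lemma invK u : invM (combM u) = u.
Proof.
have d0 : e1 * f2 - f1 * e2 - 1 = 0 by rewrite det subrr.
apply/rowP => k; rewrite /combM !mxE /=.
case: (ord3 k) => [->|[->|->]] //=.
- apply/eqP; rewrite -subr_eq0; apply/eqP.
  transitivity (u 0 i2 * (e1 * f2 - f1 * e2 - 1)); first ring.
  by rewrite d0 mulr0.
- apply/eqP; rewrite -subr_eq0; apply/eqP.
  transitivity (u 0 i3 * (e1 * f2 - f1 * e2 - 1)); first ring.
  by rewrite d0 mulr0.
Qed.
End Tab.
Arguments Eidx {C}. Arguments combM {C}. Arguments invM {C}.

Lemma S1_tab (C : numFieldType) (i j : 'I_3) :
  mulM 0 0 0 0 0 (Eidx 1 0 0 1 i) (Eidx 1 0 0 1 j) = combM 1 0 0 1 (S1_tbl C i j).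
Proof.
case: (ord3 i) => [->|[->|->]]; case: (ord3 j) => [->|[->|->]];
  rewrite /S1_tbl /ebase /combM /= ?mxE /=; congr (_, _, _); ring.
Qed.

Lemma S2_tab_q (C : numFieldType) (p q : C) (i j : 'I_3) : q != 0 ->
  mulM (q ^+ 2) (- (p * q)) (p ^+ 2) p q (Eidx p q (- q^-1) 0 i) (Eidx p q (- q^-1) 0 j)
  = combM p q (- q^-1) 0 (S2_tbl C i j).
Proof.
move=> hq.
case: (ord3 i) => [->|[->|->]]; case: (ord3 j) => [->|[->|->]];
  rewrite /S2_tbl /ebase /combM /= ?mxE /=; congr (_, _, _); field; done.
Qed.

Lemma S2_tab_p (C : numFieldType) (p : C) (i j : 'I_3) : p != 0 ->
  mulM (0 ^+ 2) (- (p * 0)) (p ^+ 2) p 0 (Eidx p 0 0 p^-1 i) (Eidx p 0 0 p^-1 j)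
  = combM p 0 0 p^-1 (S2_tbl C i j).
Proof.
move=> hp.
case: (ord3 i) => [->|[->|->]]; case: (ord3 j) => [->|[->|->]];
  rewrite /S2_tbl /ebase /combM /= ?mxE /=; congr (_, _, _); field; done.
Qed.

Section Main.
Variables (C : numFieldType) (V : vectType C) (mul : V -> V -> V) (bar : V -> V) (one s t : V).
Hypothesis bil : bilinear_mul mul.
Hypothesis unit1 : is_unit_elt mul one.
Hypothesis inv : is_involution mul bar.
Hypothesis dim3 : \dim (fullv : {vspace V}) = 3%N.
Hypothesis frB : free (B one s t).
Hypothesis bar1 : bar one = one.
Hypothesis bars : bar s = - s.
Hypothesis bart : bar t = - t.

Let barL : forall (a : C) (x y : V), bar (a *: x + y) = a *: bar x + bar y.
Proof. by case: inv. Qed.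
Let barK : forall x, bar (bar x) = x.
Proof. by case: inv. Qed.
Let barM_ : forall x y, bar (mul x y) = mul (bar y) (bar x).
Proof. by case: inv. Qed.

Definition psi (x : T3 C) : V := let: (x0,x1,x2) := x in x0 *: one + (x1 *: s + x2 *: t).
Definition crd (v : V) : T3 C := (coord (B one s t) i1 v, coord (B one s t) i2 v, coord (B one s t) i3 v).

Lemma basisB : basis_of fullv (B one s t).
Proof. by rewrite basisEfree frB subvf dim3. Qed.

Lemma psiK : cancel crd psi.
Proof.
move=> v; rewrite [RHS](coord_basis basisB (memvf v)) sum3 /=.
by rewrite addrA.
Qed.

Lemma coordB (k : 'I_3) x0 x1 x2 :
  coord (B one s t) k (x0 *: one + (x1 *: s + x2 *: t)) =
  x0 * (i1 == k)%:R + x1 * (i2 == k)%:R + x2 * (i3 == k)%:R.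
Proof.
rewrite !linearD !linearZ /= -(B0 one s t) -(B1 one s t) -(B2 one s t) !coord_free //.
by rewrite addrA.
Qed.

Lemma crdK : cancel psi crd.
Proof.
case=> [[x0 x1] x2]; rewrite /crd /psi !coordB /=.
by congr (_, _, _); rewrite ?mulr1 ?mulr0 ?addr0 ?add0r.
Qed.

Lemma psi_inj : injective psi. Proof. exact: can_inj crdK. Qed.
Lemma crd_inj : injective crd. Proof. exact: can_inj psiK. Qed.

Lemma crd_add v w : crd (v + w) = addM (crd v) (crd w).
Proof. by rewrite /crd !linearD. Qed.

Lemma psi_add x y : psi (addM x y) = psi x + psi y.
Proof. by apply: crd_inj; rewrite crd_add !crdK. Qed.


Lemma psi_opp x : psi (oppM x) = - psi x.
Proof.
case: x => [[x0 x1] x2] /=.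
by rewrite !scaleNr !opprD.
Qed.
Lemma psi_scale k x : psi (scaleM k x) = k *: psi x.
Proof.
case: x => [[x0 x1] x2] /=.
by rewrite !scalerDr !scalerA.
Qed.
Lemma psi_bar x : psi (barM x) = bar (psi x).
Proof.
case: x => [[x0 x1] x2] /=.
by rewrite (@barD C V bar barL) (@barD C V bar barL) !(@barZ C V bar barL) bar1 bars bart !scalerN !scaleNr.
Qed.

Let mDl := @mulDl C V mul bil.
Let mDr := @mulDr C V mul bil.
Let mZl := @mulZl C V mul bil.
Let mZr := @mulZr C V mul bil.
Let mNl := @mulNl C V mul bil.
Let mNr := @mulNr C V mul bil.
Let m1l v : mul one v = v. Proof. by case: (unit1 v). Qed.
Let m1r v : mul v one = v. Proof. by case: (unit1 v). Qed.

Lemma crd_scale k v : crd (k *: v) = scaleM k (crd v).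
Proof. by rewrite /crd !linearZ. Qed.
Lemma crd_opp v : crd (- v) = oppM (crd v).
Proof. by rewrite /crd !linearN. Qed.
Lemma crd_bar v : crd (bar v) = barM (crd v).
Proof. by rewrite -{1}(psiK v) -psi_bar crdK. Qed.
Lemma crd_one : crd one = (1, 0, 0).
Proof. by rewrite -(crdK (1,0,0)) /= scale1r !scale0r !addr0. Qed.
Lemma crd_s : crd s = (0, 1, 0).
Proof. by rewrite -(crdK (0,1,0)) /= scale1r !scale0r addr0 add0r. Qed.
Lemma crd_t : crd t = (0, 0, 1).
Proof. by rewrite -(crdK (0,0,1)) /= scale1r !scale0r !add0r. Qed.

Definition ca := coord (B one s t) i1 (mul s s).
Definition cb := coord (B one s t) i1 (mul s t).
Definition cp := coord (B one s t) i2 (mul s t).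
Definition cq := coord (B one s t) i3 (mul s t).
Definition cc := coord (B one s t) i1 (mul t t).

Lemma mulss : crd (mul s s) = (ca, 0, 0).
Proof.
have H : crd (mul s s) = barM (crd (mul s s)) by rewrite -crd_bar barM_ bars mNl mNr opprK.
move: H; rewrite /crd /=; case=> H1 H2.
by rewrite -/ca (half0 H1) (half0 H2).
Qed.
Lemma multt : crd (mul t t) = (cc, 0, 0).
Proof.
have H : crd (mul t t) = barM (crd (mul t t)) by rewrite -crd_bar barM_ bart mNl mNr opprK.
move: H; rewrite /crd /=; case=> H1 H2.
by rewrite -/cc (half0 H1) (half0 H2).
Qed.
Lemma mulst : crd (mul s t) = (cb, cp, cq).
Proof. by []. Qed.
Lemma mults : crd (mul t s) = (cb, - cp, - cq).
Proof.
have -> : mul t s = bar (mul s t) by rewrite barM_ bars bart mNl mNr opprK.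
by rewrite crd_bar mulst.
Qed.

Lemma psi_mul x y : psi (mulM ca cb cc cp cq x y) = mul (psi x) (psi y).
Proof.
apply: crd_inj; rewrite crdK.
case: x => [[x0 x1] x2]; case: y => [[y0 y1] y2].
rewrite [psi (x0, x1, x2)]/= [psi (y0, y1, y2)]/=.
rewrite !mDl !mDr !mZl !mZr !m1l !m1r.
rewrite !crd_add !crd_scale mulss multt mulst mults crd_one crd_s crd_t /=.
congr (_, _, _); ring.
Qed.

Hypothesis str : structurable mul bar.

Lemma psi_Top x z : psi (TopM ca cb cc cp cq x z) = Top mul bar (psi x) (psi z).
Proof. by rewrite /TopM /Top !psi_add psi_opp !psi_mul psi_bar. Qed.
Lemma psi_Vop x y z : psi (VopM ca cb cc cp cq x y z) = Vop mul bar (psi x) (psi y) (psi z).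
Proof. by rewrite /VopM /Vop !psi_add psi_opp !psi_mul !psi_bar. Qed.

Lemma model_str X Y Z W :
  let T := TopM ca cb cc cp cq in let Vo := VopM ca cb cc cp cq in
  addM (T Z (Vo X Y W)) (oppM (Vo X Y (T Z W))) =
  addM (Vo (T Z X) Y W) (oppM (Vo X (T (barM Z) Y) W)).
Proof.
move=> T Vo; rewrite /T /Vo; apply: psi_inj.
rewrite !(psi_add, psi_opp, psi_Top, psi_Vop, psi_bar).
exact: str.
Qed.

Lemma eqs : ca = cq ^+ 2 /\ cc = cp ^+ 2 /\ cb = - (cp * cq).
Proof. by apply: model_eqs; exact: model_str. Qed.

Lemma iso_model tbl e1 e2 f1 f2 (det : e1 * f2 - f1 * e2 = 1)
  (Htbl : forall i j, mulM ca cb cc cp cq (Eidx e1 e2 f1 f2 i) (Eidx e1 e2 f1 f2 j)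
            = combM e1 e2 f1 f2 (tbl i j)) :
  alg_inv_iso mul bar (table_mul tbl) (@S_bar C).
Proof.
pose F i := psi (Eidx e1 e2 f1 f2 i).
have chi_psi u : @chi C V F u = psi (combM e1 e2 f1 f2 u).
  rewrite /chi sum3 /F Eidx1 Eidx2 Eidx3 -!psi_scale -!psi_add; congr psi; rewrite /=.
  congr (_, _, _); ring.
apply: (@iso_from_basis C V mul bar bil barL tbl F (fun v => invM e1 e2 f1 f2 (crd v))).
- by move=> v; rewrite chi_psi combK // psiK.
- by move=> u; rewrite chi_psi crdK invK.
- by move=> i j; rewrite chi_psi -Htbl psi_mul.
- have ne21 : (i2 == i1) = false by [].
  have ne31 : (i3 == i1) = false by [].
  move=> i; rewrite /F -psi_bar; case: (ord3 i) => [->|[->|->]].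
  + by rewrite eqxx Eidx1; congr psi; rewrite /= oppr0.
  + by rewrite ne21 Eidx2 -psi_opp; congr psi; rewrite /= oppr0.
  + by rewrite ne31 Eidx3 -psi_opp; congr psi; rewrite /= oppr0.
Qed.

Lemma classify : alg_inv_iso mul bar (@S1_mul C) (@S_bar C) \/
                 alg_inv_iso mul bar (@S2_mul C) (@S_bar C).
Proof.
have [ha [hc hb]] := eqs.
case: (eqVneq cq 0) => hq.
- case: (eqVneq cp 0) => hp.
  + left; apply: (iso_model (S1_tbl C) 1 0 0 1).
      by rewrite mulr1 mulr0 subr0.
    move=> i j; rewrite ha hb hc hp hq expr0n /= mulr0 oppr0.
    exact: S1_tab.
  + right; apply: (iso_model (S2_tbl C) cp 0 0 cp^-1).
      by rewrite mulr0 subr0 mulfV.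
    move=> i j; rewrite ha hb hc hq.
    exact: S2_tab_p.
- right; apply: (iso_model (S2_tbl C) cp cq (- cq^-1) 0).
    by field.
  move=> i j; rewrite ha hb hc.
  exact: S2_tab_q.
Qed.

End Main.

Section Skew.
Variables (C : numFieldType) (V : vectType C) (mul : V -> V -> V) (bar : V -> V) (one : V).
Hypothesis bil : bilinear_mul mul.
Hypothesis unit1 : is_unit_elt mul one.
Hypothesis inv : is_involution mul bar.
Hypothesis dim3 : \dim (fullv : {vspace V}) = 3%N.
Hypothesis hdim : \dim (herm_space bar) = 1%N.

Let barL : forall (a : C) (x y : V), bar (a *: x + y) = a *: bar x + bar y.
Proof. by case: inv. Qed.
Let barK : forall x, bar (bar x) = x.
Proof. by case: inv. Qed.
Let barM_ : forall x y, bar (mul x y) = mul (bar y) (bar x).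
Proof. by case: inv. Qed.

Definition bm (x : V) : V := bar x - x.
Lemma bm_lin : linear bm.
Proof. by move=> a x y; rewrite /bm barL scalerBr opprD addrACA. Qed.
HB.instance Definition _ := GRing.isLinear.Build C V V *:%R bm bm_lin.

Lemma one_bar : bar one = one.
Proof.
have h : forall x, mul (bar one) x = x.
  by move=> x; rewrite -{1}(barK x) -barM_; case: (unit1 (bar x)) => _ ->.
by rewrite -[LHS](proj2 (unit1 (bar one))) h.
Qed.

Let L := (linfun bm @: fullv)%VS.

Lemma dimL : \dim L = 2%N.
Proof.
have := limg_ker_dim (linfun bm) fullv; rewrite capfv dim3.
have -> : lker (linfun bm) = herm_space bar by [].
by rewrite hdim => -[].
Qed.

Lemma skewL v : v \in L -> bar v = - v.
Proof.
case/memv_imgP => u _ ->; rewrite lfunE /= /bm.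
by rewrite (@barD C V bar barL) barK (@barN C V bar barL) opprB addrC.
Qed.

Lemma skew_basis : exists s t : V, [/\ free (B one s t), bar one = one, bar s = - s & bar t = - t].
Proof.
have fX : free (vbasis L) := basis_free (vbasisP L).
have sX : size (vbasis L) = 2%N by rewrite size_tuple dimL.
have mX : {subset (vbasis L : seq V) <= L} by move=> x; apply: basis_mem (vbasisP L).
move: (vbasis L : seq V) fX sX mX => X fX sX mX.
case: X fX sX mX => [|s [|t []]] //= fX _ mX.
have sL : s \in L by apply: mX; rewrite inE eqxx.
have tL : t \in L by apply: mX; rewrite !inE eqxx orbT.
have s0 : s != 0.
  by apply: (free_not0 fX); rewrite inE eqxx.
have one0 : one != 0.
  apply: contraNneq s0 => e; case: (unit1 s) => <- _.
  by rewrite e (@mul0l C V mul bil).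
exists s, t; split; [|exact: one_bar|exact: skewL|exact: skewL].
rewrite /B /= free_cons fX andbT.
apply/negP => oneS.
have : one \in L.
  by move: oneS; apply/subvP/span_subvP => x; rewrite !inE => /orP[] /eqP ->.
move/skewL; rewrite one_bar => h; have e := vhalf0 h.
by rewrite e eqxx in one0.
Qed.
End Skew.

Theorem mainTheorem2 (R : realType) (V : vectType R[i])
    (mul : V -> V -> V) (bar : V -> V) (one : V) :
  bilinear_mul mul ->
  is_unit_elt mul one ->
  is_involution mul bar ->
  \dim (fullv : {vspace V}) = 3%N ->
  \dim (herm_space bar) = 1%N ->
  structurable mul bar ->
  alg_inv_iso mul bar (@S1_mul R[i]) (@S_bar R[i]) \/
  alg_inv_iso mul bar (@S2_mul R[i]) (@S_bar R[i]).
Proof.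
move=> bil unit1 inv dim3 hdim str.
have [s [t [fr b1 bs bt]]] := @skew_basis _ V mul bar one bil unit1 inv dim3 hdim.
by apply: (@classify _ V mul bar one s t).
Qed.
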